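(* Let $a>b>0$ and let $E$ be the ellipse $\frac{x^2}{a^2}+\frac{y^2}{b^2}=1$. For a 3-periodic billiard orbit $T$ in $E$, let $r,R$ be the inradius and circumradius of $T$, let $A'$ be the area of the excentral triangle of $T$ and $A''$ the area of the extouch triangle of $T$. Then $A'/A''=(2R/r)^2$, and this ratio is the same for all 3-periodic orbits in $E$.
   Context: A 3-periodic billiard orbit in the ellipse $E$ is a nondegenerate triangle $P_1P_2P_3$ with all vertices on $E$ such that at each vertex $P_i$ the normal line to $E$ at $P_i$ bisects the interior angle of the triangle at $P_i$. The excentral triangle has vertices at the three excenters of $T$. The extouch triangle has as vertices the three points where each excircle of $T$ touches the corresponding side (segment) of $T$. *)

(* Defs.v *)
From Stdlib Require Import Reals.
Open Scope R_scope.

Definition pt := (R * R)%type.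

Definition padd (p q : pt) : pt := (fst p + fst q, snd p + snd q).
Definition psub (p q : pt) : pt := (fst p - fst q, snd p - snd q).
Definition pscale (k : R) (p : pt) : pt := (k * fst p, k * snd p).
Definition dot (u v : pt) : R := fst u * fst v + snd u * snd v.
Definition det2 (u v : pt) : R := fst u * snd v - snd u * fst v.
Definition dist (p q : pt) : R := sqrt (dot (psub p q) (psub p q)).

Definition on_ellipse (a b : R) (p : pt) : Prop :=
  (fst p) ^ 2 / a ^ 2 + (snd p) ^ 2 / b ^ 2 = 1.

(* A normal vector to the ellipse at p (gradient of x^2/a^2 + y^2/b^2). *)
Definition ellipse_normal (a b : R) (p : pt) : pt :=
  (fst p / a ^ 2, snd p / b ^ 2).

Definition bisector_dir (P Q S : pt) : pt :=
  padd (pscale (/ dist Q P) (psub Q P)) (pscale (/ dist S P) (psub S P)).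

(* The normal line to E at P (through P) bisects the interior angle at P:
   both lines pass through P, so they coincide iff directions are parallel. *)
Definition normal_bisects (a b : R) (P Q S : pt) : Prop :=
  det2 (bisector_dir P Q S) (ellipse_normal a b P) = 0.

Definition nondegenerate (P1 P2 P3 : pt) : Prop :=
  det2 (psub P2 P1) (psub P3 P1) <> 0.

Definition billiard3 (a b : R) (P1 P2 P3 : pt) : Prop :=
  nondegenerate P1 P2 P3 /\
  on_ellipse a b P1 /\ on_ellipse a b P2 /\ on_ellipse a b P3 /\
  normal_bisects a b P1 P2 P3 /\
  normal_bisects a b P2 P3 P1 /\
  normal_bisects a b P3 P1 P2.

Definition tri_area (P1 P2 P3 : pt) : R :=
  Rabs (det2 (psub P2 P1) (psub P3 P1)) / 2.

Definition semiperimeter (P1 P2 P3 : pt) : R :=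
  (dist P2 P3 + dist P1 P3 + dist P1 P2) / 2.

Definition inradius (P1 P2 P3 : pt) : R :=
  tri_area P1 P2 P3 / semiperimeter P1 P2 P3.
Definition circumradius (P1 P2 P3 : pt) : R :=
  dist P2 P3 * dist P1 P3 * dist P1 P2 / (4 * tri_area P1 P2 P3).

(* Excenter opposite vertex P (the other vertices Q, S):
   barycentrics (-|QS| : |PS| : |PQ|). *)
Definition excenter (P Q S : pt) : pt :=
  let la := dist Q S in let lb := dist P S in let lc := dist P Q in
  pscale (/ (- la + lb + lc))
    (padd (pscale (- la) P) (padd (pscale lb Q) (pscale lc S))).

(* Orthogonal projection of X onto the line AB (tangency point of a circle
   centred at X tangent to line AB). *)
Definition foot (X A B : pt) : pt :=
  padd A (pscale (dot (psub X A) (psub B A) / dot (psub B A) (psub B A))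
                 (psub B A)).

Definition extouch_pt (P Q S : pt) : pt := foot (excenter P Q S) Q S.

Definition excentral_area (P1 P2 P3 : pt) : R :=
  tri_area (excenter P1 P2 P3) (excenter P2 P3 P1) (excenter P3 P1 P2).

Definition extouch_area (P1 P2 P3 : pt) : R :=
  tri_area (extouch_pt P1 P2 P3) (extouch_pt P2 P3 P1) (extouch_pt P3 P1 P2).

(* Main.v *)
From Pilot Require Import Defs.
From Stdlib Require Import Reals Lra Psatz Classical.
From Coquelicot Require Import Complex.
Import Pilot.Defs.
Open Scope R_scope.
Ltac nz := repeat split; first [assumption | let H := fresh in intro H; first [lra | nra]].

Lemma dist_sym p q : dist p q = dist q p.
Proof. unfold dist, dot, psub; simpl. f_equal. ring. Qed.

Lemma dist_sq p q : dist p q * dist p q = (fst p - fst q)^2 + (snd p - snd q)^2.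
Proof. unfold dist, dot, psub; simpl. rewrite sqrt_sqrt. ring. apply Rplus_le_le_0_compat; apply Rle_0_sqr. Qed.

Lemma dist_nn p q : 0 <= dist p q.
Proof. apply sqrt_pos. Qed.

Lemma tri_pos la lb lc : 0 <= la -> 0 <= lb -> 0 <= lc ->
  0 < (la+lb+lc)*(-la+lb+lc)*(la-lb+lc)*(la+lb-lc) ->
  0 < -la+lb+lc /\ 0 < la-lb+lc /\ 0 < la+lb-lc.
Proof.
  intros Ha Hb Hc H.
  assert (Hs : 0 < la+lb+lc).
  { destruct (Rle_lt_dec (la+lb+lc) 0); [|lra].
    assert (la = 0) by lra. assert (lb = 0) by lra. assert (lc = 0) by lra. subst. lra. }
  assert (H' : 0 < (-la+lb+lc)*(la-lb+lc)*(la+lb-lc)).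
  { replace ((la+lb+lc)*(-la+lb+lc)*(la-lb+lc)*(la+lb-lc)) with
       ((la+lb+lc)*((-la+lb+lc)*(la-lb+lc)*(la+lb-lc))) in H by ring.
    apply (Rmult_lt_reg_l (la+lb+lc)); lra. }
  set (f1 := -la+lb+lc) in *. set (f2 := la-lb+lc) in *. set (f3 := la+lb-lc) in *.
  assert (f1 + f2 >= 0) by (unfold f1, f2; lra).
  assert (f1 + f3 >= 0) by (unfold f1, f3; lra).
  assert (f2 + f3 >= 0) by (unfold f2, f3; lra).
  assert (G : forall g1 g2 g3, g1+g2>=0 -> g1+g3>=0 -> 0 < g1*g2*g3 -> 0 < g1).
  { intros g1 g2 g3 A1 A2 A3. destruct (Rle_lt_dec g1 0); [|lra]. exfalso.
    assert (0 <= g2*g3) by (apply Rmult_le_pos; lra).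
    assert (g1*(g2*g3) <= 0). { nra. }
    rewrite <- Rmult_assoc in H4. lra. }
  split; [|split].
  - apply (G f1 f2 f3); auto.
  - apply (G f2 f1 f3); [lra|auto|]. replace (f2*f1*f3) with (f1*f2*f3) by ring. auto.
  - apply (G f3 f1 f2); [lra|lra|]. replace (f3*f1*f2) with (f1*f2*f3) by ring. auto.
Qed.

Lemma heron P Q S :
  (dist Q S + dist P S + dist P Q) * (- dist Q S + dist P S + dist P Q) *
  (dist Q S - dist P S + dist P Q) * (dist Q S + dist P S - dist P Q)
  = 4 * (det2 (psub Q P) (psub S P))^2.
Proof.
  pose proof (dist_sq Q S) as Ha. pose proof (dist_sq P S) as Hb. pose proof (dist_sq P Q) as Hc.
  set (la := dist Q S) in *. set (lb := dist P S) in *. set (lc := dist P Q) in *.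
  replace ((la + lb + lc) * (- la + lb + lc) * (la - lb + lc) * (la + lb - lc)) with
    (2*((la*la)*(lb*lb) + (lb*lb)*(lc*lc) + (lc*lc)*(la*la)) - ((la*la)*(la*la) + (lb*lb)*(lb*lb) + (lc*lc)*(lc*lc))) by ring.
  rewrite Ha, Hb, Hc. unfold det2, psub. simpl. ring.
Qed.

Lemma tri_facts P Q S : det2 (psub Q P) (psub S P) <> 0 ->
  0 < - dist Q S + dist P S + dist P Q /\ 0 < dist Q S - dist P S + dist P Q /\
  0 < dist Q S + dist P S - dist P Q.
Proof.
  intro H. apply tri_pos; try apply dist_nn. rewrite heron.
  assert (0 < (det2 (psub Q P) (psub S P))^2).
  { simpl. rewrite Rmult_1_r. apply Rsqr_pos_lt. exact H. }
  lra.
Qed.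

Lemma extouch_eq P Q S : det2 (psub Q P) (psub S P) <> 0 ->
  extouch_pt P Q S =
  padd Q (pscale ((dist Q S + dist P S - dist P Q)/(2*dist Q S)) (psub S Q)).
Proof.
  intro H. destruct (tri_facts P Q S H) as [F1 [F2 F3]].
  pose proof (dist_sq Q S) as Ha. pose proof (dist_sq P S) as Hb. pose proof (dist_sq P Q) as Hc.
  unfold extouch_pt, foot, excenter.
  set (la := dist Q S) in *. set (lb := dist P S) in *. set (lc := dist P Q) in *.
  assert (Hla : 0 < la) by lra.
  f_equal. f_equal.
  destruct P as [xp yp]; destruct Q as [xq yq]; destruct S as [xs ys].
  unfold dot, psub, padd, pscale in *; simpl in *.
  assert (Hd : (xs - xq) * (xs - xq) + (ys - yq) * (ys - yq) = la*la) by (rewrite Ha; ring).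
  rewrite Hd.
  set (u := (xp - xq) * (xs - xq) + (yp - yq) * (ys - yq)).
  assert (Hu : 2*u = lc*lc + la*la - lb*lb) by (rewrite Ha, Hb, Hc; unfold u; ring).
  set (den := - la + lb + lc) in *.
  replace ((/ den * (- la * xp + (lb * xq + lc * xs)) - xq) * (xs - xq) +
      (/ den * (- la * yp + (lb * yq + lc * ys)) - yq) * (ys - yq))
    with ((- la * u + lc * (la*la)) / den).
  2:{ rewrite <- Hd. unfold u. unfold den in *. field. nz. }
  replace u with ((lc*lc + la*la - lb*lb)/2) by lra.
  unfold den in *. field. nz.
Qed.

Lemma part1 P1 P2 P3 : nondegenerate P1 P2 P3 ->
  excentral_area P1 P2 P3 / extouch_area P1 P2 P3 =
  (dist P2 P3 * dist P1 P3 * dist P1 P2 * (dist P2 P3 + dist P1 P3 + dist P1 P2)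
    / (det2 (psub P2 P1) (psub P3 P1))^2)^2.
Proof.
  intro HD. unfold nondegenerate in HD.
  assert (HD2 : det2 (psub P3 P2) (psub P1 P2) <> 0).
  { replace (det2 (psub P3 P2) (psub P1 P2)) with (det2 (psub P2 P1) (psub P3 P1)); auto.
    unfold det2, psub; simpl; ring. }
  assert (HD3 : det2 (psub P1 P3) (psub P2 P3) <> 0).
  { replace (det2 (psub P1 P3) (psub P2 P3)) with (det2 (psub P2 P1) (psub P3 P1)); auto.
    unfold det2, psub; simpl; ring. }
  pose proof (heron P1 P2 P3) as Her.
  destruct (tri_facts P1 P2 P3 HD) as [F1 [F2 F3]].
  unfold excentral_area, extouch_area.
  rewrite (extouch_eq _ _ _ HD), (extouch_eq _ _ _ HD2), (extouch_eq _ _ _ HD3).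
  unfold excenter.
  rewrite (dist_sym P3 P1), (dist_sym P2 P1), (dist_sym P3 P2) in *.
  set (la := dist P2 P3) in *. set (lb := dist P1 P3) in *. set (lc := dist P1 P2) in *.
  assert (Hla : 0 < la) by lra. assert (Hlb : 0 < lb) by lra. assert (Hlc : 0 < lc) by lra.
  clearbody la lb lc.
  destruct P1 as [x1 y1]; destruct P2 as [x2 y2]; destruct P3 as [x3 y3].
  unfold tri_area, det2, psub, padd, pscale in *; simpl in *.
  set (D := (x2 - x1) * (y3 - y1) - (y2 - y1) * (x3 - x1)) in *.
  set (f1 := - la + lb + lc) in *. set (f2 := la - lb + lc) in *. set (f3 := la + lb - lc) in *.
  assert (Hprod : 0 < la*lb*lc) by (apply Rmult_lt_0_compat; [apply Rmult_lt_0_compat|]; lra).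
  assert (HF : f1*f2*f3 = 4*(D*(D*1))/(la+lb+lc)).
  { rewrite <- Her. field. nz. }
  assert (HFp : 0 < f1*f2*f3) by (apply Rmult_lt_0_compat; [apply Rmult_lt_0_compat|]; lra).
  match goal with |- Rabs ?E / 2 / (Rabs ?T / 2) = _ => set (EE := E); set (TT := T) end.
  assert (HE : EE = 4*la*lb*lc*D/(f1*f2*f3)).
  { unfold EE, D, f1, f2, f3 in *. field. nz. }
  assert (HT : TT = f1*f2*f3*D/(4*la*lb*lc)).
  { unfold TT, D, f1, f2, f3 in *. field. nz. }
  rewrite HE, HT.
  set (G := la*lb*lc*(la+lb+lc)/(D*(D*1))).
  assert (Hq : 4*la*lb*lc*D/(f1*f2*f3) / (f1*f2*f3*D/(4*la*lb*lc)) = G * (G*1)).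
  { unfold G. rewrite HF. field. nz. }
  assert (HTnz : f1*f2*f3*D/(4*la*lb*lc) <> 0).
  { unfold Rdiv. apply Rmult_integral_contrapositive_currified; [|apply Rinv_neq_0_compat; nz].
    apply Rmult_integral_contrapositive_currified; [nz|exact HD]. }
  assert (HR : Rabs (f1*f2*f3*D/(4*la*lb*lc)) <> 0) by (apply Rabs_no_R0; exact HTnz).
  replace (Rabs (4*la*lb*lc*D/(f1*f2*f3)) / 2 / (Rabs (f1*f2*f3*D/(4*la*lb*lc)) / 2))
    with (Rabs (4*la*lb*lc*D/(f1*f2*f3)) / Rabs (f1*f2*f3*D/(4*la*lb*lc))) by (field; exact HR).
  replace (Rabs (4*la*lb*lc*D/(f1*f2*f3)) / Rabs (f1*f2*f3*D/(4*la*lb*lc))) with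
    (Rabs (4*la*lb*lc*D/(f1*f2*f3) / (f1*f2*f3*D/(4*la*lb*lc))))
    by (unfold Rdiv at 1 3; rewrite Rabs_mult, Rabs_inv; reflexivity).
  rewrite Hq.
  apply Rabs_pos_eq. rewrite Rmult_1_r. apply Rle_0_sqr.
Qed.


Lemma part1b P1 P2 P3 : nondegenerate P1 P2 P3 ->
  2 * circumradius P1 P2 P3 / inradius P1 P2 P3 =
  dist P2 P3 * dist P1 P3 * dist P1 P2 * (dist P2 P3 + dist P1 P3 + dist P1 P2)
    / (det2 (psub P2 P1) (psub P3 P1))^2.
Proof.
  intro HD. unfold nondegenerate in HD.
  destruct (tri_facts P1 P2 P3 HD) as [F1 [F2 F3]].
  unfold circumradius, inradius, tri_area, semiperimeter.
  set (la := dist P2 P3) in *. set (lb := dist P1 P3) in *. set (lc := dist P1 P2) in *.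
  set (D := det2 (psub P2 P1) (psub P3 P1)) in *.
  assert (HA : Rabs D <> 0) by (apply Rabs_no_R0; exact HD).
  assert (HDD : Rabs D * Rabs D = D^2).
  { rewrite <- Rabs_mult. rewrite Rabs_pos_eq. ring. apply Rle_0_sqr. }
  rewrite <- HDD. field. nz.
Qed.

Lemma l2_id a b Xi Yi Xj Yj : Xi^2+Yi^2=1 -> Xj^2+Yj^2=1 ->
  a^2*(Xi-Xj)^2 + b^2*(Yi-Yj)^2 =
  (1 - Xi*Xj - Yi*Yj)*(a^2*(1 - Xi*Xj + Yi*Yj) + b^2*(1 + Xi*Xj - Yi*Yj)).
Proof.
  intros H1 H2.
  assert (E : a^2*(Xi-Xj)^2 + b^2*(Yi-Yj)^2 -
    (1 - Xi*Xj - Yi*Yj)*(a^2*(1 - Xi*Xj + Yi*Yj) + b^2*(1 + Xi*Xj - Yi*Yj)) =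
    (b^2 - b^2*Yj^2 + a^2*Yj^2)*(Xi^2+Yi^2-1) + (b^2*Xi^2 + a^2 - a^2*Xi^2)*(Xj^2+Yj^2-1))
    by ring.
  rewrite H1, H2 in E. lra.
Qed.

Lemma pair_rel a b K Xi Yi Xj Yj l : Xi^2+Yi^2=1 -> Xj^2+Yj^2=1 ->
  l*l = (a*Xi - a*Xj)^2 + (b*Yi - b*Yj)^2 -> 0 < l ->
  1 - (Xi*Xj + Yi*Yj) = K * l ->
  0 < K /\ Xi*Xj + Yi*Yj - K^2*(a^2-b^2)*(Xi*Xj - Yi*Yj) = 1 - K^2*(a^2+b^2).
Proof.
  intros H1 H2 Hl Hl0 HK.
  assert (Hm : 1 - (Xi*Xj + Yi*Yj) = ((Xi-Xj)^2 + (Yi-Yj)^2)/2).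
  { assert (E : 1 - (Xi*Xj + Yi*Yj) - ((Xi-Xj)^2 + (Yi-Yj)^2)/2 =
       - (Xi^2+Yi^2-1)/2 - (Xj^2+Yj^2-1)/2) by field.
    rewrite H1, H2 in E. lra. }
  assert (Hmpos : 0 < 1 - (Xi*Xj + Yi*Yj)).
  { rewrite Hm. destruct (Rle_lt_dec ((Xi-Xj)^2 + (Yi-Yj)^2) 0) as [Hle|]; [|lra].
    exfalso. pose proof (pow2_ge_0 (Xi-Xj)). pose proof (pow2_ge_0 (Yi-Yj)).
    assert (HX : (Xi-Xj)^2 = 0) by lra. assert (HY : (Yi-Yj)^2 = 0) by lra.
    assert (l*l = a^2*(Xi-Xj)^2 + b^2*(Yi-Yj)^2) by (rewrite Hl; ring).
    rewrite HX, HY in H3. nra. }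
  assert (HKp : 0 < K).
  { destruct (Rle_lt_dec K 0); [|lra]. nra. }
  split; [exact HKp|].
  pose proof (l2_id a b Xi Yi Xj Yj H1 H2) as L.
  replace (a^2*(Xi-Xj)^2 + b^2*(Yi-Yj)^2) with (l*l) in L
    by (rewrite Hl; ring).
  set (m := 1 - (Xi*Xj + Yi*Yj)) in *.
  replace (1 - Xi*Xj - Yi*Yj) with m in L by (unfold m; ring).
  assert (Hst : m = K^2 * (a^2*(1 - Xi*Xj + Yi*Yj) + b^2*(1 + Xi*Xj - Yi*Yj))).
  { apply (Rmult_eq_reg_l m); [|nz].
    transitivity (K^2*(l*l)). { rewrite HK. ring. } rewrite L. ring. }
  unfold m in Hst. lra.
Qed.

Definition Rel (v w : R) (s t : C) : C :=
  (s*s + t*t - RtoC v*(s*s*t*t + RtoC 1) - RtoC 2 * RtoC w * s * t)%C.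

Lemma Ccancel (a X : C) : a <> RtoC 0 -> (a * X)%C = RtoC 0 -> X = RtoC 0.
Proof.
  intros Ha H. replace X with ((a*X)/a)%C by (field; exact Ha). rewrite H. field. exact Ha.
Qed.

Lemma closure (v w : R) (z1 z2 z3 : C) :
  z1 <> RtoC 0 -> z2 <> RtoC 0 -> z1 <> z2 -> z1 <> z3 -> z2 <> z3 ->
  Rel v w z1 z2 = RtoC 0 -> Rel v w z1 z3 = RtoC 0 -> Rel v w z2 z3 = RtoC 0 ->
  v*v - 1 = 2*w /\ (z1*z2 + z1*z3 + z2*z3)%C = RtoC (-v).
Proof.
  intros H1 H2 D12 D13 D23 R12 R13 R23.
  assert (Hsub : forall a b : C, a <> b -> (a - b)%C <> RtoC 0).
  { intros a b Hab Hc. apply Hab. replace a with (b + (a - b))%C by ring. rewrite Hc. ring. }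
  assert (S1 : ((RtoC 1 - RtoC v*z1*z1)*(z2+z3) - RtoC 2*RtoC w*z1)%C = RtoC 0).
  { apply (Ccancel (z2 - z3)). apply Hsub; auto.
    replace ((z2 - z3) * ((RtoC 1 - RtoC v*z1*z1)*(z2+z3) - RtoC 2*RtoC w*z1))%C
      with (Rel v w z1 z2 - Rel v w z1 z3)%C by (unfold Rel; ring).
    rewrite R12, R13. ring. }
  assert (S2 : ((RtoC 1 - RtoC v*z2*z2)*(z1+z3) - RtoC 2*RtoC w*z2)%C = RtoC 0).
  { apply (Ccancel (z1 - z3)). apply Hsub; auto.
    replace ((z1 - z3) * ((RtoC 1 - RtoC v*z2*z2)*(z1+z3) - RtoC 2*RtoC w*z2))%C
      with (Rel v w z1 z2 - Rel v w z2 z3)%C by (unfold Rel; ring).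
    rewrite R12, R23. ring. }
  assert (S3 : ((RtoC 1 - RtoC v*z3*z3)*(z1+z2) - RtoC 2*RtoC w*z3)%C = RtoC 0).
  { apply (Ccancel (z1 - z2)). apply Hsub; auto.
    replace ((z1 - z2) * ((RtoC 1 - RtoC v*z3*z3)*(z1+z2) - RtoC 2*RtoC w*z3))%C
      with (Rel v w z1 z3 - Rel v w z2 z3)%C by (unfold Rel; ring).
    rewrite R13, R23. ring. }
  set (e1 := (z1+z2+z3)%C). set (e2 := (z1*z2+z1*z3+z2*z3)%C). set (e3 := (z1*z2*z3)%C).
  set (al := (RtoC v * e3 + e1)%C). set (be := (- RtoC v - e2)%C).
  assert (Q1 : (z1*z1*z1 - RtoC v*z1 - (RtoC 1 - RtoC v*z1*z1)*e3)%C = RtoC 0).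
  { replace (z1*z1*z1 - RtoC v*z1 - (RtoC 1 - RtoC v*z1*z1)*e3)%C with
      (z1 * (Rel v w z1 z2 + z2 * (- ((RtoC 1 - RtoC v*z1*z1)*(z2+z3) - RtoC 2*RtoC w*z1))))%C
      by (unfold Rel, e3; ring).
    rewrite R12, S1. ring. }
  assert (Q2 : (z2*z2*z2 - RtoC v*z2 - (RtoC 1 - RtoC v*z2*z2)*e3)%C = RtoC 0).
  { replace (z2*z2*z2 - RtoC v*z2 - (RtoC 1 - RtoC v*z2*z2)*e3)%C with
      (z2 * (Rel v w z1 z2 + z1 * (- ((RtoC 1 - RtoC v*z2*z2)*(z1+z3) - RtoC 2*RtoC w*z2))))%C
      by (unfold Rel, e3; ring).
    rewrite R12, S2. ring. }
  assert (A1 : (z1 * (al * z1 + be))%C = RtoC 0).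
  { replace (z1 * (al * z1 + be))%C with
      ((z1*z1*z1 - RtoC v*z1 - (RtoC 1 - RtoC v*z1*z1)*e3) - (z1 - z1)*(z1-z2)*(z1-z3))%C
      by (unfold al, be, e1, e2, e3; ring).
    rewrite Q1. ring. }
  assert (A2 : (z2 * (al * z2 + be))%C = RtoC 0).
  { replace (z2 * (al * z2 + be))%C with
      ((z2*z2*z2 - RtoC v*z2 - (RtoC 1 - RtoC v*z2*z2)*e3) - (z2 - z1)*(z2-z2)*(z2-z3))%C
      by (unfold al, be, e1, e2, e3; ring).
    rewrite Q2. ring. }
  apply Ccancel in A1; auto. apply Ccancel in A2; auto.
  assert (Hal : al = RtoC 0).
  { apply (Ccancel (z1 - z2)). apply Hsub; auto.
    replace ((z1 - z2) * al)%C with ((al*z1 + be) - (al*z2+be))%C by ring.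
    rewrite A1, A2. ring. }
  assert (Hbe : be = RtoC 0).
  { replace be with ((al*z1 + be) - al*z1)%C by ring. rewrite A1, Hal. ring. }
  split.
  - assert (Hz : (RtoC (v*v - 1 - 2*w) * z1)%C = RtoC 0).
    { replace (RtoC (v*v - 1 - 2*w) * z1)%C with
        (((RtoC 1 - RtoC v*z1*z1)*(z2+z3) - RtoC 2*RtoC w*z1) - (RtoC 1 - RtoC v*z1*z1)*al
          - RtoC v * (z1*z1*z1 - RtoC v*z1 - (RtoC 1 - RtoC v*z1*z1)*e3))%C.
      2:{ unfold al, e1, e3. unfold RtoC, Cmult, Cplus, Cminus, Copp; simpl.
          apply injective_projections; simpl; ring. }
      rewrite S1, Hal, Q1. ring. }
    rewrite Cmult_comm in Hz. apply Ccancel in Hz; auto.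
    apply (f_equal fst) in Hz. simpl in Hz. lra.
  - replace e2 with (- RtoC v - be)%C by (unfold be; ring). rewrite Hbe.
    unfold RtoC, Copp, Cminus, Cplus; simpl. apply injective_projections; simpl; ring.
Qed.

Lemma rel_of v w Xi Yi Xj Yj : Xi^2+Yi^2=1 -> Xj^2+Yj^2=1 ->
  Xi*Xj + Yi*Yj - v*(Xi*Xj - Yi*Yj) = w -> Rel v w (Xi,Yi) (Xj,Yj) = RtoC 0.
Proof.
  intros H1 H2 HE.
  assert (H1' : Xi^2+Yi^2-1 = 0) by lra. assert (H2' : Xj^2+Yj^2-1 = 0) by lra.
  assert (HE' : Xi*Xj + Yi*Yj - v*(Xi*Xj - Yi*Yj) - w = 0) by lra.
  unfold Rel, RtoC, Cmult, Cplus, Cminus, Copp; simpl. apply injective_projections; simpl.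
  - transitivity (2*(Xi*Xj - Yi*Yj)*(Xi*Xj + Yi*Yj - v*(Xi*Xj - Yi*Yj) - w)
       + (-1 + 2*Yj^2 + v*Yj^2 + v*Xj^2)*(Xi^2+Yi^2-1) + (1 - 2*Xi^2 + v)*(Xj^2+Yj^2-1)).
    + ring.
    + rewrite HE', H1', H2'. ring.
  - transitivity (2*(Xi*Yj + Yi*Xj)*(Xi*Xj + Yi*Yj - v*(Xi*Xj - Yi*Yj) - w)
       + (-2*Xj*Yj)*(Xi^2+Yi^2-1) + (-2*Xi*Yi)*(Xj^2+Yj^2-1)).
    + ring.
    + rewrite HE', H1', H2'. ring.
Qed.

Lemma bis_eq P Q S n : det2 (psub Q P) (psub S P) <> 0 -> 0 < fst n ^ 2 + snd n ^ 2 ->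
  det2 (bisector_dir P Q S) n = 0 ->
  dot (psub Q P) n / dist Q P = dot (psub S P) n / dist S P.
Proof.
  intros HD Hn Hb.
  destruct (tri_facts P Q S HD) as [F1 [F2 F3]].
  unfold bisector_dir in Hb. rewrite (dist_sym Q P), (dist_sym S P) in *.
  pose proof (dist_sq P Q) as Hc. pose proof (dist_sq P S) as Hbb.
  set (la := dist Q S) in *. set (lb := dist P S) in *. set (lc := dist P Q) in *.
  assert (Hlb : 0 < lb) by lra. assert (Hlc : 0 < lc) by lra. clearbody la lb lc.
  destruct P as [xp yp]; destruct Q as [xq yq]; destruct S as [xs ys]; destruct n as [nx ny].
  unfold det2, dot, psub, padd, pscale in *; simpl in *.
  set (ux := / lc * (xq - xp)) in *. set (uy := / lc * (yq - yp)) in *.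
  set (wx := / lb * (xs - xp)) in *. set (wy := / lb * (ys - yp)) in *.
  assert (Hu : ux^2 + uy^2 - 1 = 0).
  { replace (ux^2+uy^2-1) with (((xq-xp)^2+(yq-yp)^2 - lc*lc)/(lc*lc)) by (unfold ux, uy; field; nz).
    rewrite Hc. unfold Rdiv. apply Rmult_eq_0_compat_r. ring. }
  assert (Hw : wx^2 + wy^2 - 1 = 0).
  { replace (wx^2+wy^2-1) with (((xs-xp)^2+(ys-yp)^2 - lb*lb)/(lb*lb)) by (unfold wx, wy; field; nz).
    rewrite Hbb. unfold Rdiv. apply Rmult_eq_0_compat_r. ring. }
  assert (Hdet : (xq - xp) * (ys - yp) - (yq - yp) * (xs - xp) = lc*lb*(ux*wy - uy*wx)).
  { unfold ux, uy, wx, wy. field. nz. }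
  assert (Hdd : (ux + wx) * ny - (uy + wy) * nx = 0) by exact Hb.
  set (A := ux*nx + uy*ny). set (B := wx*nx + wy*ny).
  assert (HAB : (A - B) * (A + B) = 0).
  { transitivity ((nx^2+ny^2)*((ux^2 + uy^2 - 1) - (wx^2 + wy^2 - 1))
        - ((ux*ny - uy*nx) - (wx*ny - wy*nx)) * ((ux + wx) * ny - (uy + wy) * nx)).
    - unfold A, B. ring.
    - rewrite Hu, Hw, Hdd. ring. }
  assert (HAB' : A = B).
  { destruct (Rmult_integral _ _ HAB) as [H|H]; [lra|]. exfalso.
    assert (Sx : (ux + wx) * (nx^2+ny^2) = 0).
    { transitivity ((A + B)*nx + ((ux + wx) * ny - (uy + wy) * nx)*ny).
      - unfold A, B. ring.
      - rewrite H, Hdd. ring. }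
    assert (Sy : (uy + wy) * (nx^2+ny^2) = 0).
    { transitivity ((A + B)*ny - ((ux + wx) * ny - (uy + wy) * nx)*nx).
      - unfold A, B. ring.
      - rewrite H, Hdd. ring. }
    apply Rmult_integral in Sx. apply Rmult_integral in Sy.
    destruct Sx as [Sx|Sx]; [|lra]. destruct Sy as [Sy|Sy]; [|lra].
    apply HD. rewrite Hdet.
    replace wx with (-ux) by lra. replace wy with (-uy) by lra. ring. }
  transitivity A. { unfold A, ux, uy. field. nz. }
  rewrite HAB'. unfold B, wx, wy. field. nz.
Qed.

Lemma sq0 t : t^2 = 0 -> t = 0.
Proof. intro H. destruct (Req_dec t 0) as [|H0]; auto. exfalso. exact (pow_nonzero t 2 H0 H). Qed.

Lemma dot_n a b Xi Yi Xj Yj : a <> 0 -> b <> 0 -> Xi^2+Yi^2=1 ->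
  dot (psub (a*Xj, b*Yj) (a*Xi, b*Yi)) (ellipse_normal a b (a*Xi, b*Yi)) = Xi*Xj+Yi*Yj - 1.
Proof.
  intros Ha Hb H. unfold dot, psub, ellipse_normal; cbn [fst snd].
  transitivity (Xi*Xj+Yi*Yj - (Xi^2+Yi^2)). { field. auto. }
  rewrite H. ring.
Qed.

Lemma normal_pos a b X Y : 0 < a -> 0 < b -> X^2+Y^2=1 ->
  0 < fst (ellipse_normal a b (a*X, b*Y)) ^ 2 + snd (ellipse_normal a b (a*X, b*Y)) ^ 2.
Proof.
  intros Ha Hb H. unfold ellipse_normal; simpl.
  replace (a * X / (a * (a * 1))) with (X/a) by (field; lra).
  replace (b * Y / (b * (b * 1))) with (Y/b) by (field; lra).
  pose proof (pow2_ge_0 (X/a)). pose proof (pow2_ge_0 (Y/b)).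
  destruct (Rle_lt_dec ((X/a)^2 + (Y/b)^2) 0) as [Hle|]; [|lra]. exfalso.
  assert (HX : X/a = 0) by (apply sq0; lra). assert (HY : Y/b = 0) by (apply sq0; lra).
  assert (X = 0). { replace X with (a*(X/a)) by (field; lra). rewrite HX. ring. }
  assert (Y = 0). { replace Y with (b*(Y/b)) by (field; lra). rewrite HY. ring. }
  subst. lra.
Qed.

Lemma circ_of a b X Y : 0 < a -> 0 < b -> on_ellipse a b (a*X, b*Y) -> X^2+Y^2 = 1.
Proof.
  intros Ha Hb H. unfold on_ellipse in H; cbn [fst snd] in H. rewrite <- H. field. nz.
Qed.

Lemma orbit_value a b P1 P2 P3 : 0 < b -> b < a -> billiard3 a b P1 P2 P3 ->
  exists k, 0 < k /\ (a^2-b^2)^2*k^2 + 2*(a^2+b^2)*k - 3 = 0 /\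
  dist P2 P3 * dist P1 P3 * dist P1 P2 * (dist P2 P3 + dist P1 P3 + dist P1 P2)
    / (det2 (psub P2 P1) (psub P3 P1))^2
  = (9 - k^2*(a^2-b^2)^2)/(4*k^2*a^2*b^2).
Proof.
  intros hb hab [HD [E1 [E2 [E3 [B1 [B2 B3]]]]]].
  assert (ha : 0 < a) by lra.
  unfold nondegenerate in HD.
  assert (HD2 : det2 (psub P3 P2) (psub P1 P2) <> 0).
  { replace (det2 (psub P3 P2) (psub P1 P2)) with (det2 (psub P2 P1) (psub P3 P1)); auto.
    unfold det2, psub; simpl; ring. }
  destruct (tri_facts P1 P2 P3 HD) as [F1 [F2 F3]].
  pose proof (dist_sq P2 P3) as Ha. pose proof (dist_sq P1 P3) as Hb. pose proof (dist_sq P1 P2) as Hc.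
  destruct P1 as [x1 y1]; destruct P2 as [x2 y2]; destruct P3 as [x3 y3].
  assert (ex : forall x, x = a * (x / a)) by (intro; field; lra).
  assert (ey : forall y, y = b * (y / b)) by (intro; field; lra).
  rewrite (ex x1), (ex x2), (ex x3), (ey y1), (ey y2), (ey y3) in *.
  set (X1 := x1/a) in *. set (X2 := x2/a) in *. set (X3 := x3/a) in *.
  set (Y1 := y1/b) in *. set (Y2 := y2/b) in *. set (Y3 := y3/b) in *.
  clearbody X1 X2 X3 Y1 Y2 Y3. clear ex ey x1 x2 x3 y1 y2 y3.
  apply circ_of in E1; auto. apply circ_of in E2; auto. apply circ_of in E3; auto.
  unfold normal_bisects in B1, B2, B3.
  apply bis_eq in B1; [| exact HD | apply normal_pos; auto].
  apply bis_eq in B2; [| exact HD2 | apply normal_pos; auto].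
  rewrite !dot_n in B1, B2 by (auto; lra).
  rewrite (dist_sym (a * X2, b * Y2) (a * X1, b * Y1)), (dist_sym (a * X3, b * Y3) (a * X1, b * Y1)),
    (dist_sym (a * X3, b * Y3) (a * X2, b * Y2)) in *.
  set (la := dist (a * X2, b * Y2) (a * X3, b * Y3)) in *.
  set (lb := dist (a * X1, b * Y1) (a * X3, b * Y3)) in *.
  set (lc := dist (a * X1, b * Y1) (a * X2, b * Y2)) in *.
  assert (Hla : 0 < la) by lra. assert (Hlb : 0 < lb) by lra. assert (Hlc : 0 < lc) by lra.
  clearbody la lb lc. cbn [fst snd] in Ha, Hb, Hc.
  set (K := (1 - (X1*X2+Y1*Y2))/lc).
  assert (HK12 : 1 - (X1*X2+Y1*Y2) = K*lc) by (unfold K; field; nz).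
  assert (HK13 : 1 - (X1*X3+Y1*Y3) = K*lb).
  { unfold K. replace (1 - (X1*X3+Y1*Y3)) with (-((X1*X3+Y1*Y3-1)/lb)*lb) by (field; nz).
    rewrite <- B1. field. nz. }
  assert (HK23 : 1 - (X2*X3+Y2*Y3) = K*la).
  { unfold K. replace (1 - (X2*X3+Y2*Y3)) with (-((X2*X3+Y2*Y3-1)/la)*la) by (field; nz).
    rewrite B2. replace (X2*X1+Y2*Y1) with (X1*X2+Y1*Y2) by ring. field. nz. }
  clearbody K.
  destruct (pair_rel a b K X1 Y1 X2 Y2 lc E1 E2 Hc Hlc HK12) as [HKp R12].
  destruct (pair_rel a b K X1 Y1 X3 Y3 lb E1 E3 Hb Hlb HK13) as [_ R13].
  destruct (pair_rel a b K X2 Y2 X3 Y3 la E2 E3 Ha Hla HK23) as [_ R23].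
  set (v := K^2*(a^2-b^2)) in *. set (w := 1 - K^2*(a^2+b^2)) in *.
  pose proof (rel_of v w X1 Y1 X2 Y2 E1 E2 R12) as C12.
  pose proof (rel_of v w X1 Y1 X3 Y3 E1 E3 R13) as C13.
  pose proof (rel_of v w X2 Y2 X3 Y3 E2 E3 R23) as C23.
  assert (Z1 : (X1, Y1) <> RtoC 0).
  { unfold RtoC. intro H. injection H as H H'. subst. lra. }
  assert (Z2 : (X2, Y2) <> RtoC 0).
  { unfold RtoC. intro H. injection H as H H'. subst. lra. }
  assert (D12 : (X1, Y1) <> (X2, Y2)).
  { intro H. injection H as H H'. subst. assert (lc*lc = 0) by (rewrite Hc; ring). nra. }
  assert (D13 : (X1, Y1) <> (X3, Y3)).
  { intro H. injection H as H H'. subst. assert (lb*lb = 0) by (rewrite Hb; ring). nra. }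
  assert (D23 : (X2, Y2) <> (X3, Y3)).
  { intro H. injection H as H H'. subst. assert (la*la = 0) by (rewrite Ha; ring). nra. }
  destruct (closure v w _ _ _ Z1 Z2 D12 D13 D23 C12 C13 C23) as [Hvw He2].
  apply (f_equal fst) in He2. simpl in He2.
  assert (He2' : X1*X2 - Y1*Y2 + (X1*X3 - Y1*Y3) + (X2*X3 - Y2*Y3) = -v) by lra.
  exists (K^2). split; [nra|]. split.
  { replace ((a^2-b^2)^2*(K^2)^2 + 2*(a^2+b^2)*K^2 - 3) with (v*v - 1 - 2*w) by (unfold v, w; ring).
    lra. }
  set (m12 := 1 - (X1*X2+Y1*Y2)) in *. set (m13 := 1 - (X1*X3+Y1*Y3)) in *.
  set (m23 := 1 - (X2*X3+Y2*Y3)) in *.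
  assert (Hd2 : det2 (psub (a * X2, b * Y2) (a * X1, b * Y1))
                     (psub (a * X3, b * Y3) (a * X1, b * Y1)) ^ 2 = a^2*b^2*(2*m12*m13*m23)).
  { replace (det2 (psub (a * X2, b * Y2) (a * X1, b * Y1)) (psub (a * X3, b * Y3) (a * X1, b * Y1)))
      with (a*b*((X2-X1)*(Y3-Y1)-(Y2-Y1)*(X3-X1))) by (unfold det2, psub; simpl; ring).
    assert (C1 : X1^2+Y1^2-1 = 0) by lra. assert (C2 : X2^2+Y2^2-1 = 0) by lra.
    assert (C3 : X3^2+Y3^2-1 = 0) by lra.
    assert (G : ((X2-X1)*(Y3-Y1)-(Y2-Y1)*(X3-X1))^2 - 2*m12*m13*m23 =
      (X3^2 - 2*Y2*Y3 + 2*Y2^2*Y3^2 - 2*X2*X3 + 2*X2*Y2*X3*Y3 + X2^2)*(X1^2+Y1^2-1)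
      + (2*Y3^2 + X3^2 - 2*Y1*Y3 - 2*X1*X3 + 2*X1*Y1*X3*Y3 + X1^2 - 2*X1^2*Y3^2)*(X2^2+Y2^2-1)
      + (2 - X2^2 - 2*Y1*Y2 - 2*X1*X2 + 2*X1*Y1*X2*Y2 - X1^2 + 2*X1^2*X2^2)*(X3^2+Y3^2-1))
      by (unfold m12, m13, m23; ring).
    rewrite C1, C2, C3 in G.
    replace ((a * b * ((X2 - X1) * (Y3 - Y1) - (Y2 - Y1) * (X3 - X1))) ^ 2)
      with (a^2*b^2*((X2 - X1) * (Y3 - Y1) - (Y2 - Y1) * (X3 - X1)) ^ 2) by ring.
    f_equal. lra. }
  assert (Hsum : m12 + m13 + m23 = (9 - v^2)/2).
  { assert (Hv : v*(X1*X2 - Y1*Y2) + v*(X1*X3 - Y1*Y3) + v*(X2*X3 - Y2*Y3) = -(v*v)).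
    { replace (v*(X1*X2 - Y1*Y2) + v*(X1*X3 - Y1*Y3) + v*(X2*X3 - Y2*Y3)) with
        (v*(X1*X2 - Y1*Y2 + (X1*X3 - Y1*Y3) + (X2*X3 - Y2*Y3))) by ring.
      rewrite He2'. ring. }
    unfold m12, m13, m23. replace (v^2) with (v*v) by ring. lra. }
  assert (Hm12 : 0 < m12) by (rewrite HK12; nra).
  assert (Hm13 : 0 < m13) by (rewrite HK13; nra).
  assert (Hm23 : 0 < m23) by (rewrite HK23; nra).
  assert (Hla' : la = m23/K) by (rewrite HK23; field; nz).
  assert (Hlb' : lb = m13/K) by (rewrite HK13; field; nz).
  assert (Hlc' : lc = m12/K) by (rewrite HK12; field; nz).
  rewrite Hd2, Hla', Hlb', Hlc'.
  transitivity ((m12+m13+m23)/(2*K^4*a^2*b^2)).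
  { field. nz. }
  rewrite Hsum. unfold v. field. nz.
Qed.

Theorem theorem2 (a b : R) (hb : 0 < b) (hab : b < a) :
  (forall P1 P2 P3 : pt, billiard3 a b P1 P2 P3 ->
     excentral_area P1 P2 P3 / extouch_area P1 P2 P3
     = (2 * circumradius P1 P2 P3 / inradius P1 P2 P3) ^ 2) /\
  (exists c : R, forall P1 P2 P3 : pt, billiard3 a b P1 P2 P3 ->
     excentral_area P1 P2 P3 / extouch_area P1 P2 P3 = c).
Proof.
  split.
  - intros P1 P2 P3 H. destruct H as [HD _].
    rewrite (part1 _ _ _ HD), (part1b _ _ _ HD). reflexivity.
  - destruct (classic (exists Q1 Q2 Q3, billiard3 a b Q1 Q2 Q3)) as [[Q1 [Q2 [Q3 HQ]]] | Hno].
    + exists (excentral_area Q1 Q2 Q3 / extouch_area Q1 Q2 Q3).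
      intros P1 P2 P3 HP.
      pose proof HP as [HDP _]. pose proof HQ as [HDQ _].
      rewrite (part1 _ _ _ HDP), (part1 _ _ _ HDQ).
      destruct (orbit_value a b P1 P2 P3 hb hab HP) as [k [Hk [Hq Hv]]].
      destruct (orbit_value a b Q1 Q2 Q3 hb hab HQ) as [k' [Hk' [Hq' Hv']]].
      rewrite Hv, Hv'.
      assert (Hkk : k = k').
      { assert (E : (k - k')*((a^2-b^2)^2*(k+k') + 2*(a^2+b^2)) = 0).
        { transitivity (((a^2-b^2)^2*k^2 + 2*(a^2+b^2)*k - 3) - ((a^2-b^2)^2*k'^2 + 2*(a^2+b^2)*k' - 3)).
          - ring.
          - rewrite Hq, Hq'. ring. }
        apply Rmult_integral in E. destruct E as [E|E]; [lra|]. exfalso.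
        assert (0 <= (a^2-b^2)^2) by apply pow2_ge_0.
        assert (0 < a^2+b^2) by nra.
        assert (0 <= (a^2-b^2)^2*(k+k')) by (apply Rmult_le_pos; lra).
        lra. }
      rewrite Hkk. reflexivity.
    + exists 0. intros P1 P2 P3 HP. exfalso. apply Hno. eauto.
Qed.
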